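(* Let $\langle A,C,d,O,v,(\prec_a)_{a\in A}\rangle$ be an infinite sequential game with $C$ finite, let $a\in A$, and assume: (1) $\prec_a$ is a strict weak order; (2) for every play $p\in C^\omega$, every increasing $\varphi:\mathbb{N}\to\mathbb{N}$ and every sequence $(s_n)_{n\in\mathbb{N}}$ of strategies of player $a$, if $g_a(p_{<\varphi(n+1)},s_{n+1})\subsetneq g_a(p_{<\varphi(n)},s_n)$ for all $n\in\mathbb{N}$, then $v(p)\in\bigcap_{n\in\mathbb{N}}g_a(p_{<\varphi(n)},s_n)$. Then for every $\gamma\in C^*$ there exists a strategy $s$ of player $a$ such that $g_a(\gamma,s)=G_a(\gamma)$.
   Context: An infinite sequential game $\langle A,C,d,O,v,(\prec_a)_{a\in A}\rangle$ consists of a non-empty set of agents $A$, a non-empty set of choices $C$, $d:C^*\to A$ (the agent choosing after each finite history), a non-empty set of outcomes $O$, $v:C^\omega\to O$, and binary relations $\prec_a$ on $O$ (preferences). A strategy of $a$ is a function $s:d^{-1}(\{a\})\to C$. For a partial function $t:\subseteq C^*\to C$, let $P(t)$ be the set of plays $p(\sigma)$ (where $p_n=\sigma(p_{<n})$) over all total $\sigma:C^*\to C$ extending $t$. For $\gamma\in C^*$ and a strategy $s$ of $a$, let $s|_{\gamma}$ be the restriction of $s$ to histories in $d^{-1}(\{a\})$ extending $\gamma$, and define the guarantee $g_a(\gamma,s):=\{o\in O\mid\exists p\in P(s|_\gamma)\cap\gamma C^\omega,\ \neg(o\prec_a v(p))\}$ and the best guarantee $G_a(\gamma):=\bigcap_s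 g_a(\gamma,s)$ (intersection over all strategies $s$ of $a$). $p_{<n}$ denotes the length-$n$ prefix of $p$. A strict weak order is an irreflexive, transitive relation $\prec$ such that $\neg(x\prec y)\wedge\neg(y\prec z)$ implies $\neg(x\prec z)$. *)

(* Defs.v *)
From Stdlib Require Import List Arith FinFun.
Import ListNotations.

(* Finite histories C^* are lists (chronological order); plays C^omega are nat -> C. *)

Definition pre {C : Type} (p : nat -> C) (n : nat) : list C :=
  map p (seq 0 n).

Definition hprefix {C : Type} (g h : list C) : Prop := exists k, h = g ++ k.

Definition strategy {A C : Type} (d : list C -> A) (a : A) : Type :=
  {h : list C | d h = a} -> C.

Record pfun (C : Type) := PFun { pdom : list C -> Prop; papp : {h : list C | pdom h} -> C }.
Arguments pdom {C} _ _.
Arguments papp {C} _ _.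

Definition extends {C : Type} (sigma : list C -> C) (t : pfun C) : Prop :=
  forall x : {h : list C | pdom t h}, sigma (proj1_sig x) = papp t x.

Definition is_play_of {C : Type} (sigma : list C -> C) (p : nat -> C) : Prop :=
  forall n, p n = sigma (pre p n).

Definition Pl {C : Type} (t : pfun C) (p : nat -> C) : Prop :=
  exists sigma : list C -> C, extends sigma t /\ is_play_of sigma p.

Definition restr {A C : Type} (d : list C -> A) (a : A) (s : strategy d a)
  (gamma : list C) : pfun C :=
  PFun C (fun h => d h = a /\ hprefix gamma h)
         (fun x => s (exist _ (proj1_sig x) (proj1 (proj2_sig x)))).

Definition guarantee {A C O : Type} (d : list C -> A) (v : (nat -> C) -> O)
  (prec : A -> O -> O -> Prop) (a : A) (gamma : list C) (s : strategy d a) (o : O) : Prop :=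
  exists p, Pl (restr d a s gamma) p /\ pre p (length gamma) = gamma /\ ~ prec a o (v p).

Definition best_guarantee {A C O : Type} (d : list C -> A) (v : (nat -> C) -> O)
  (prec : A -> O -> O -> Prop) (a : A) (gamma : list C) (o : O) : Prop :=
  forall s : strategy d a, guarantee d v prec a gamma s o.

Definition strict_weak_order {O : Type} (lt : O -> O -> Prop) : Prop :=
  (forall x, ~ lt x x) /\
  (forall x y z, lt x y -> lt y z -> lt x z) /\
  (forall x y z, ~ lt x y -> ~ lt y z -> ~ lt x z).

Definition strict_subset {O : Type} (S T : O -> Prop) : Prop :=
  (forall o, S o -> T o) /\ ~ (forall o, T o -> S o).

(* Main.v *)
Require Import Defs.
From Stdlib Require Import List Arith FinFun Lia Classical ClassicalEpsilon ProofIrrelevance.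
Import ListNotations.

Section Aux.
Variables (A C O : Type) (d : list C -> A) (v : (nat -> C) -> O)
  (prec : A -> O -> O -> Prop) (a : A).
Hypothesis H1 : strict_weak_order (prec a).

Lemma pre_length (p : nat -> C) n : length (pre p n) = n.
Proof. unfold pre. rewrite length_map, length_seq. reflexivity. Qed.

Lemma pre_S (p : nat -> C) n : pre p (S n) = pre p n ++ [p n].
Proof. unfold pre. rewrite seq_S, map_app. reflexivity. Qed.

Lemma pre_app (p : nat -> C) m k : pre p (m + k) = pre p m ++ map p (seq m k).
Proof. unfold pre. rewrite seq_app, map_app. reflexivity. Qed.

Lemma firstn_pre (p : nat -> C) m n : m <= n -> firstn m (pre p n) = pre p m.
Proof.
  intro Hmn. replace n with (m + (n - m)) by lia. rewrite pre_app.
  rewrite firstn_app, pre_length, Nat.sub_diag, firstn_all2 by (rewrite pre_length; lia).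
  simpl. apply app_nil_r.
Qed.

Lemma hprefix_pre (p : nat -> C) h n :
  hprefix h (pre p n) <-> length h <= n /\ pre p (length h) = h.
Proof.
  split.
  - intros [k Hk].
    assert (Hl : n = length h + length k).
    { rewrite <- (pre_length p n), Hk, length_app. reflexivity. }
    split; [lia|].
    rewrite <- (firstn_pre p (length h) n) by lia. rewrite Hk.
    rewrite firstn_app, Nat.sub_diag, firstn_all2 by lia. simpl. apply app_nil_r.
  - intros [Hl Hp]. exists (map p (seq (length h) (n - length h))).
    rewrite <- Hp at 1. rewrite <- pre_app. f_equal. lia.
Qed.

Lemma hprefix_app (h x y : list C) : hprefix (h ++ x) y -> hprefix h y.
Proof. intros [k Hk]. exists (x ++ k). rewrite Hk, app_assoc. reflexivity. Qed.

Lemma sv_eq (s : strategy d a) h1 h2 (E1 : d h1 = a) (E2 : d h2 = a) :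
  h1 = h2 -> s (exist _ h1 E1) = s (exist _ h2 E2).
Proof. intro E. subst. f_equal. f_equal. apply proof_irrelevance. Qed.

Definition cons (s : strategy d a) gamma (p : nat -> C) : Prop :=
  forall n (H : d (pre p n) = a), hprefix gamma (pre p n) -> p n = s (exist _ (pre p n) H).

Lemma Pl_cons s gamma p : Pl (restr d a s gamma) p <-> cons s gamma p.
Proof.
  split.
  - intros [sigma [Hext Hplay]] n H Hpre. rewrite Hplay.
    specialize (Hext (exist _ (pre p n) (conj H Hpre))). simpl in Hext.
    rewrite Hext. apply sv_eq. reflexivity.
  - intros Hc.
    exists (fun h => match excluded_middle_informative (d h = a /\ hprefix gamma h) with
             | left H => s (exist _ h (proj1 H))
             | right _ => p (length h) end).
    split.
    + intros [h Hh]. simpl. destruct (excluded_middle_informative _) as [H|H].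
      * apply sv_eq. reflexivity.
      * contradiction.
    + intro n. destruct (excluded_middle_informative _) as [H|H].
      * apply (Hc n (proj1 H) (proj2 H)).
      * rewrite pre_length. reflexivity.
Qed.

Lemma g_iff h s o : guarantee d v prec a h s o <->
  exists p, cons s h p /\ pre p (length h) = h /\ ~ prec a o (v p).
Proof.
  unfold guarantee. split; intros [p [H [H' H'']]]; exists p; rewrite Pl_cons in *; auto.
Qed.

Definition upset (S : O -> Prop) := forall o o', S o -> ~ prec a o' o -> S o'.

Lemma upset_g h s : upset (guarantee d v prec a h s).
Proof.
  intros o o' Ho Ho'. apply g_iff in Ho. apply g_iff.
  destruct Ho as [p [H [H' H'']]]. exists p. repeat split; auto.
  destruct H1 as [_ [_ W]]. eapply W; eauto.
Qed.

Lemma upset_G h : upset (best_guarantee d v prec a h).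
Proof. intros o o' Ho Ho' s. exact (upset_g h s o o' (Ho s) Ho'). Qed.

Lemma linear (S T : O -> Prop) : upset S -> upset T -> forall o1, S o1 -> ~ T o1 ->
  forall o2, T o2 -> S o2.
Proof.
  intros HS HT o1 HS1 HT1 o2 HT2. destruct H1 as [Irr [Tr _]].
  destruct (classic (prec a o2 o1)) as [P|P].
  - exfalso. apply HT1. apply (HT o2 o1 HT2). intro Q. apply (Irr o1). eauto.
  - exact (HS o1 o2 HS1 P).
Qed.

Lemma g_child (s : strategy d a) h c :
  (forall H : d h = a, s (exist _ h H) = c) ->
  forall o, guarantee d v prec a (h ++ [c]) s o -> guarantee d v prec a h s o.
Proof.
  intros Hs o Ho. apply g_iff in Ho. apply g_iff.
  destruct Ho as [p [Hc [Hp Ho]]]. exists p.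
  rewrite length_app in Hp. simpl in Hp. rewrite Nat.add_1_r, pre_S in Hp.
  apply app_inj_tail in Hp. destruct Hp as [Hp Hpc].
  repeat split; auto.
  intros n H Hpre. pose proof Hpre as Hpre'. apply hprefix_pre in Hpre'.
  destruct Hpre' as [Hl _].
  destruct (Nat.eq_dec n (length h)) as [E|E].
  - subst n. assert (Hh : d h = a) by (rewrite <- Hp; exact H).
    rewrite Hpc, <- (Hs Hh). apply sv_eq. symmetry. exact Hp.
  - apply Hc. apply hprefix_pre. rewrite length_app. simpl. split; [lia|].
    rewrite Nat.add_1_r, pre_S, Hp, Hpc. reflexivity.
Qed.

Lemma g_local (s s' : strategy d a) h :
  (forall h' (H : d h' = a), hprefix h h' -> s (exist _ h' H) = s' (exist _ h' H)) ->
  forall o, guarantee d v prec a h s o -> guarantee d v prec a h s' o.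
Proof.
  intros Hl o Ho. apply g_iff in Ho. apply g_iff.
  destruct Ho as [p [Hc [Hp Ho]]]. exists p. repeat split; auto.
  intros n H Hpre. rewrite <- Hl by exact Hpre. apply Hc; exact Hpre.
Qed.

Lemma g_anode (s : strategy d a) h (H : d h = a) :
  forall o, guarantee d v prec a h s o -> guarantee d v prec a (h ++ [s (exist _ h H)]) s o.
Proof.
  intros o Ho. apply g_iff in Ho. apply g_iff.
  destruct Ho as [p [Hc [Hp Ho]]]. exists p.
  assert (H0 : d (pre p (length h)) = a) by (rewrite Hp; exact H).
  assert (Hpc : p (length h) = s (exist _ h H)).
  { rewrite (Hc (length h) H0).
    - apply sv_eq. exact Hp.
    - rewrite Hp. exists []. symmetry. apply app_nil_r. }
  repeat split; auto.
  - intros n Hn Hpre. apply Hc. eapply hprefix_app. exact Hpre.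
  - rewrite length_app. simpl. rewrite Nat.add_1_r, pre_S, Hp, Hpc. reflexivity.
Qed.

Lemma G_nona h c : d h <> a ->
  forall o, best_guarantee d v prec a (h ++ [c]) o -> best_guarantee d v prec a h o.
Proof.
  intros Ha o Ho s. apply (g_child s h c); [intro H; contradiction | apply Ho].
Qed.

Lemma G_amin h (Ha : d h = a) c :
  (forall c' o, best_guarantee d v prec a (h ++ [c]) o -> best_guarantee d v prec a (h ++ [c']) o) ->
  forall o, best_guarantee d v prec a (h ++ [c]) o -> best_guarantee d v prec a h o.
Proof.
  intros Hmin o Ho s. apply (g_child s h (s (exist _ h Ha))).
  - intro H. apply sv_eq. reflexivity.
  - apply (Hmin _ o Ho).
Qed.

Lemma bad_child h (Ha : d h = a) c (U : O -> Prop) (t : strategy d a) :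
  (forall o, guarantee d v prec a (h ++ [c]) t o -> U o) ->
  exists t' : strategy d a, forall o, guarantee d v prec a h t' o -> U o.
Proof.
  intro Ht.
  exists (fun x => match excluded_middle_informative (proj1_sig x = h) with
           | left _ => c | right _ => t x end).
  intros o Ho. apply Ht.
  apply (g_anode _ h Ha) in Ho. simpl in Ho.
  destruct (excluded_middle_informative (h = h)) as [_|E]; [|contradiction].
  revert Ho. apply g_local.
  intros h' H Hp. simpl. destruct (excluded_middle_informative (h' = h)) as [E|E]; [|reflexivity].
  exfalso. subst h'. destruct Hp as [k Hk]. apply (f_equal (@length C)) in Hk.
  rewrite !length_app in Hk. simpl in Hk. lia.
Qed.

Lemma list_min (F : C -> O -> Prop) (HF : forall c, upset (F c)) (l : list C) (x : C) :
  In x l -> exists c, In c l /\ forall c', In c' l -> forall o, F c o -> F c' o.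
Proof.
  revert x. induction l as [|y l IH]; intros x Hx; [destruct Hx|].
  destruct (classic (exists z, In z l)) as [[z Hz]|Hno].
  - destruct (IH z Hz) as [c [Hc Hmin]].
    destruct (classic (forall o, F y o -> F c o)) as [Hyc|Hyc].
    + exists y. split; [left; reflexivity|].
      intros c' [E|Hc'] o Ho; [subst; exact Ho|]. apply Hmin; auto.
    + apply not_all_ex_not in Hyc. destruct Hyc as [o Ho].
      apply imply_to_and in Ho. destruct Ho as [Fy Fc].
      exists c. split; [right; exact Hc|].
      intros c' [E|Hc'] o' Ho'.
      * rewrite <- E. exact (linear _ _ (HF y) (HF c) o Fy Fc o' Ho').
      * apply Hmin; auto.
  - exists y. split; [left; reflexivity|].
    intros c' [E|Hc'] o Ho; [subst; exact Ho|]. exfalso; apply Hno; eauto.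
Qed.

Lemma exist_strict (U : O -> Prop) h h' (t : strategy d a) :
  ~ (exists t : strategy d a, forall o, guarantee d v prec a h t o -> U o) ->
  (forall o, best_guarantee d v prec a h' o -> U o) ->
  exists t'', strict_subset (guarantee d v prec a h' t'') (guarantee d v prec a h t).
Proof.
  intros Hbad HG.
  assert (Hno : ~ (forall o, guarantee d v prec a h t o -> U o)) by (intro Q; apply Hbad; eauto).
  apply not_all_ex_not in Hno. destruct Hno as [o Ho]. apply imply_to_and in Ho.
  destruct Ho as [Hg HU].
  assert (HnG : ~ best_guarantee d v prec a h' o) by auto.
  unfold best_guarantee in HnG. apply not_all_ex_not in HnG. destruct HnG as [t'' Ht''].
  exists t''. split.
  - exact (linear _ _ (upset_g h t) (upset_g h' t'') o Hg Ht'').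
  - intro Q. apply Ht''. apply Q. exact Hg.
Qed.

Lemma least_nat (Q : nat -> Prop) n : Q n -> exists m, Q m /\ forall i, i < m -> ~ Q i.
Proof.
  induction n as [n IH] using lt_wf_ind. intro Qn.
  destruct (classic (exists i, i < n /\ Q i)) as [[i [Hi Qi]]|Hno].
  - exact (IH i Hi Qi).
  - exists n. split; auto. intros i Hi Qi. apply Hno. eauto.
Qed.

End Aux.

Theorem lemma20 (A C O : Type) (d : list C -> A) (v : (nat -> C) -> O)
  (prec : A -> O -> O -> Prop)
  (HCne : inhabited C) (HCfin : Finite C) (a : A)
  (H1 : strict_weak_order (prec a))
  (H2 : forall (p : nat -> C) (phi : nat -> nat) (ss : nat -> strategy d a),
        (forall n, phi n < phi (S n)) ->
        (forall n, strict_subset (guarantee d v prec a (pre p (phi (S n))) (ss (S n)))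
                                 (guarantee d v prec a (pre p (phi n)) (ss n))) ->
        forall n, guarantee d v prec a (pre p (phi n)) (ss n) (v p)) :
  forall gamma : list C, exists s : strategy d a,
    forall o, guarantee d v prec a gamma s o <-> best_guarantee d v prec a gamma o.
Proof.
  intro gamma. destruct HCne as [c0].
  assert (Main : exists s : strategy d a, forall o,
             guarantee d v prec a gamma s o -> best_guarantee d v prec a gamma o).
  2:{ destruct Main as [s Hs]. exists s. intro o. split; [apply Hs | intro Ho; apply Ho]. }
  set (U := best_guarantee d v prec a gamma).
  set (good := fun h => exists t : strategy d a, forall o, guarantee d v prec a h t o -> U o).
  destruct (classic (good gamma)) as [[t Ht]|Hbad]. { exists t; exact Ht. }
  set (N := fun h => (forall o, best_guarantee d v prec a h o -> U o) /\ ~ good h).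
  assert (inhS : inhabited (strategy d a)) by exact (inhabits (fun _ => c0)).
  set (tg := fun h => epsilon inhS (fun t => forall o, guarantee d v prec a h t o -> U o)).
  assert (Htg : forall h, good h -> forall o, guarantee d v prec a h (tg h) o -> U o)
    by (intros h Hg; exact (epsilon_spec inhS _ Hg)).
  set (ch := fun h => epsilon (inhabits c0) (fun c => N (h ++ [c]))).
  assert (Hch : forall h, d h = a -> N h -> N (h ++ [ch h])).
  { intros h Hh [HU Hng]. apply (epsilon_spec (inhabits c0) (fun c => N (h++[c]))).
    destruct HCfin as [l Hl].
    destruct (list_min A C O prec a H1 (fun c => best_guarantee d v prec a (h++[c]))
                (fun c => upset_G A C O d v prec a H1 _) l c0 (Hl c0)) as [c [_ Hc]].
    exists c. split.
    - intros o Ho. apply HU. apply (G_amin A C O d v prec a H1 h Hh c); [intros c' o'; apply Hc; apply Hl | exact Ho].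
    - intros [t Ht]. apply Hng. exact (bad_child A C O d v prec a H1 h Hh c U t Ht). }
  set (Min := fun h k => length gamma <= k <= length h /\ good (firstn k h) /\
                         forall i, length gamma <= i < k -> ~ good (firstn i h)).
  set (s := fun x : {h | d h = a} =>
   match excluded_middle_informative (exists k, Min (proj1_sig x) k) with
   | left _ => tg (firstn (epsilon (inhabits 0) (Min (proj1_sig x))) (proj1_sig x)) x
   | right _ => ch (proj1_sig x) end).
  exists s. intros o Ho. apply (g_iff A C O d v prec a H1) in Ho. destruct Ho as [p [Hc [Hp Ho]]].
  assert (Hup : forall t, guarantee d v prec a gamma t (v p) -> guarantee d v prec a gamma t o)
    by (intros t Ht; exact (upset_g A C O d v prec a H1 gamma t _ _ Ht Ho)).
  assert (Hgp : forall m, length gamma <= m -> hprefix gamma (pre p m))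
    by (intros m Hm; apply hprefix_pre; auto).
  destruct (classic (exists n, length gamma <= n /\ good (pre p n))) as [[n0 Hex]|Hnex].
  - destruct (least_nat (fun n => length gamma <= n /\ good (pre p n)) n0 Hex) as [n [[Hn Hg] Hmin]].
    assert (Hcons : cons A C d a (tg (pre p n)) (pre p n) p).
    { intros m H Hpm. apply hprefix_pre in Hpm. rewrite pre_length in Hpm.
      destruct Hpm as [Hnm _].
      rewrite (Hc m H) by (apply Hgp; lia).
      assert (HM : Min (pre p m) n).
      { split; [rewrite pre_length; lia|]. split.
        - rewrite firstn_pre by lia. exact Hg.
        - intros i Hi. rewrite firstn_pre by lia. intro Q. apply (Hmin i); [lia|]. split; [lia|exact Q]. }
      unfold s; simpl. destruct (excluded_middle_informative _) as [Hk|Hk].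
      + assert (Heps : epsilon (inhabits 0) (Min (pre p m)) = n).
        { pose proof (epsilon_spec (inhabits 0) (Min (pre p m)) Hk) as HE.
          set (j := epsilon (inhabits 0) (Min (pre p m))) in *.
          destruct HE as [[Hj1 Hj2] [Hj3 Hj4]].
          destruct HM as [[Hm1 Hm2] [Hm3 Hm4]].
          destruct (Nat.lt_trichotomy j n) as [L|[E|L]]; auto; exfalso.
          - rewrite pre_length in Hj2. rewrite firstn_pre in Hj3 by lia.
            apply (Hmin j L). split; [lia|exact Hj3].
          - apply (Hj4 n); [lia|exact Hm3]. }
        rewrite Heps, firstn_pre by lia. reflexivity.
      + exfalso; apply Hk; exists n; exact HM. }
    apply (Htg (pre p n) Hg). apply (g_iff A C O d v prec a H1). exists p. split; [exact Hcons|].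
    split; [rewrite pre_length; reflexivity | exact Ho].
  - assert (HN : forall k, N (pre p (length gamma + k))).
    { induction k.
      - rewrite Nat.add_0_r, Hp. split; [auto | exact Hbad].
      - rewrite Nat.add_succ_r, pre_S.
        assert (Hng : ~ good (pre p (length gamma + k) ++ [p (length gamma + k)])).
        { intro Q. apply Hnex. exists (S (length gamma + k)). rewrite pre_S. split; [lia|exact Q]. }
        destruct IHk as [HU Hbk].
        destruct (classic (d (pre p (length gamma + k)) = a)) as [Ha|Ha].
        + assert (Hpn : p (length gamma + k) = ch (pre p (length gamma + k))).
          { rewrite (Hc _ Ha) by (apply Hgp; lia). unfold s; simpl.
            destruct (excluded_middle_informative _) as [[j Hj]|_]; [exfalso|reflexivity].
            destruct Hj as [[Hj1 Hj0] [Hj2 _]]. rewrite pre_length in Hj0.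
            rewrite firstn_pre in Hj2 by lia. apply Hnex. exists j. split; [lia|exact Hj2]. }
          rewrite Hpn. apply Hch; [exact Ha | split; auto].
        + split; [|exact Hng]. intros o' Ho'. apply HU.
          exact (G_nona A C O d v prec a H1 _ _ Ha o' Ho'). }
    intro t. apply Hup.
    set (nxt := fun k (t' : strategy d a) => epsilon inhS (fun t'' =>
            strict_subset (guarantee d v prec a (pre p (length gamma + S k)) t'')
                          (guarantee d v prec a (pre p (length gamma + k)) t'))).
    set (ss := fun k => nat_rect (fun _ => strategy d a) t nxt k).
    assert (Hss : forall k, strict_subset
                  (guarantee d v prec a (pre p (length gamma + S k)) (ss (S k)))
                  (guarantee d v prec a (pre p (length gamma + k)) (ss k))).
    { intro k. change (ss (S k)) with (nxt k (ss k)). unfold nxt.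
      apply epsilon_spec.
      destruct (HN k) as [_ Hb]. destruct (HN (S k)) as [HG _].
      exact (exist_strict A C O d v prec a H1 U _ _ (ss k) Hb HG). }
    pose proof (H2 p (fun k => length gamma + k) ss (fun k => ltac:(cbv beta; lia)) Hss 0) as R.
    simpl in R. rewrite Nat.add_0_r, Hp in R. exact R.
Qed.
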